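(* For every prime $p$, $t(3p)=3p-3$.
   Context: For a positive integer $n$ let $S(\mathbb{Z}_n)$ be the set of bijections $\mathbb{Z}_n\to\mathbb{Z}_n$. For $\pi\in S(\mathbb{Z}_n)$, $\mathrm{cyc}(\pi)$ is the number of cycles (including fixed points) of $\pi$ and $t(\pi)=n-\mathrm{cyc}(\pi)$. Let $[\pi]=\{x\mapsto \pi(x+b): b\in\mathbb{Z}_n\}$, $t([\pi])=\min_{\sigma\in[\pi]}t(\sigma)$, and $t(n)=\max_{\pi\in S(\mathbb{Z}_n)}t([\pi])$. *)

(* Defs.v *)
From mathcomp Require Import all_boot all_order all_fingroup.
Set Implicit Arguments. Unset Strict Implicit. Unset Printing Implicit Defensive.

(* Z_n is modelled by 'I_n; x + b (mod n) is iter b ordS x, ordS being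
   the cyclic successor x |-> x+1 mod n. *)
Definition addZ n (x b : 'I_n) : 'I_n := iter b (@ordS n) x.

Lemma addZ_inj n (b : 'I_n) : injective (fun x => addZ x b).
Proof.
rewrite /addZ; elim: (nat_of_ord b) => [|k IH] x y //= H.
by apply: IH; apply: ordS_inj.
Qed.

Definition rotZ n (b : 'I_n) : {perm 'I_n} := perm (@addZ_inj n b).

Definition cyc n (pi : {perm 'I_n}) : nat := #|porbits pi|.

Definition tperm_ n (pi : {perm 'I_n}) : nat := n - cyc pi.

(* the element x |-> pi (x + b) of [pi]; note (s * t) x = t (s x) *)
Definition shiftp n (pi : {perm 'I_n}) (b : 'I_n) : {perm 'I_n} := rotZ b * pi.

Definition tclass n (pi : {perm 'I_n}) : nat :=
  \big[minn/n]_(b : 'I_n) tperm_ (shiftp pi b).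

Definition tn (n : nat) : nat := \max_(pi : {perm 'I_n}) tclass pi.

(* Main.v *)
Require Import Defs.
From mathcomp Require Import all_boot all_order all_fingroup all_algebra all_solvable all_field.
From mathcomp Require Import zify ring.
Set Implicit Arguments. Unset Strict Implicit. Unset Printing Implicit Defensive.
Import GRing.Theory.

Lemma addZE n (x b : 'I_n) : val (addZ x b) = (x + b) %% n.
Proof.
rewrite /addZ; elim: (nat_of_ord b) => [|k IH] /=.
  by rewrite addn0 modn_small.
by rewrite IH addnS -addn1 modnDml addn1.
Qed.

Lemma shiftpE n (pi : {perm 'I_n}) b x : shiftp pi b x = pi (addZ x b).
Proof. by rewrite /shiftp permM /rotZ permE. Qed.

Lemma closed_porbit (T : finType) (s : {perm T}) (A : pred T) x y :
  (forall a, A a -> A (s a)) -> A x -> y \in porbit s x -> A y.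
Proof.
move=> HA Ax /porbitP [i ->]; elim: i => [|i IH]; first by rewrite expg0 perm1.
by rewrite expgSr permM; apply: HA.
Qed.

Lemma three_orbits (T : finType) (s : {perm T}) x y z :
  porbit s x != porbit s y -> porbit s y != porbit s z -> porbit s z != porbit s x ->
  3 <= #|porbits s|.
Proof.
move=> h1 h2 h3.
have M w : porbit s w \in porbits s by apply: imset_f.
apply/card_gt2P; exists (porbit s x), (porbit s y), (porbit s z).
by split; split => //; apply: M.
Qed.

Lemma le3_orbits (T : finType) (s : {perm T}) z1 z2 z3 :
  (forall x, [|| x \in porbit s z1, x \in porbit s z2 | x \in porbit s z3]) ->
  #|porbits s| <= 3.
Proof.
move=> H.
have sub: porbits s \subset porbit s @: [:: z1; z2; z3].
  apply/subsetP => _ /imsetP [x _ ->].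
  case/or3P: (H x); rewrite -eq_porbit_mem => /eqP ->; apply: imset_f;
    by rewrite !inE eqxx ?orbT.
apply: leq_trans (subset_leq_card sub) _.
apply: leq_trans (leq_imset_card _ _) _.
exact: card_size.
Qed.

Lemma avoid (T : finType) (l : seq T) : size l < #|T| -> exists w, w \notin l.
Proof.
move=> H; apply/existsP; rewrite -negb_forall; apply/negP => /forallP A.
have: #|T| <= #|l| by apply: subset_leq_card; apply/subsetP => x _; apply: A.
by move=> /leq_trans /(_ (card_size l)); rewrite leqNgt H.
Qed.

Lemma fixed_orb (T : finType) (s : {perm T}) x y : s y = y -> x \in porbit s y -> x = y.
Proof.
move=> sy H; apply/eqP; apply: (closed_porbit (A := pred1 y) _ _ H) => //= a /eqP ->.
by rewrite sy.
Qed.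

Lemma orb_neq (T : finType) (s : {perm T}) x y : x \notin porbit s y -> porbit s x != porbit s y.
Proof. by rewrite eq_porbit_mem. Qed.

Section UB.
Variable m : nat.
Local Notation N := m.+2.
Local Open Scope ring_scope.

Lemma addZR (x b : 'I_N) : addZ x b = x + b.
Proof. by apply: val_inj; rewrite addZE. Qed.

Lemma ub_core (pi : {perm 'I_N}) : (3 < N)%N ->
  (forall b, #|porbits (shiftp pi b)| <= 2)%N -> (N %| (\sum_(i < N) i ^ 2).*2)%N.
Proof.
move=> N3 H.
have sE b x : shiftp pi b x = pi (x + b) by rewrite shiftpE addZR.
have cardT : #|'I_N| = N by rewrite card_ord.
have dinj : injective (fun y : 'I_N => y - pi y).
  move=> y y' /= E; apply/eqP; apply/negPn/negP => nyy.
  pose b := y - pi y.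
  have f1 : shiftp pi b (pi y) = pi y by rewrite sE /b addrC subrK.
  have f2 : shiftp pi b (pi y') = pi y' by rewrite sE /b E addrC subrK.
  have nx : pi y != pi y' by apply: contra nyy => /eqP/perm_inj ->.
  have [w Hw] : exists w, w \notin [:: pi y; pi y'] by apply: avoid; rewrite cardT /=; lia.
  move: Hw; rewrite !inE negb_or => /andP [w1 w2].
  have := H b; rewrite leqNgt => /negP; apply.
  apply: (@three_orbits _ _ (pi y) (pi y') w); apply: orb_neq.
  - by apply/negP => /(fixed_orb f2) E0; rewrite E0 eqxx in nx.
  - by rewrite porbit_sym; apply/negP => /(fixed_orb f2) E0; rewrite E0 eqxx in w2.
  - by apply/negP => /(fixed_orb f1) E0; rewrite E0 eqxx in w1.
have dsurj b : exists z0, z0 - pi z0 = b.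
  have : b \in codom (fun y : 'I_N => y - pi y).
    by rewrite (inj_card_onto dinj) // cardT.
  by case/codomP => z0 ->; exists z0.
have sinj : injective (fun y : 'I_N => y + pi y).
  move=> y y' /= E; apply/eqP; apply/negPn/negP => nyy.
  pose b := y' - pi y.
  pose x := y - b; pose x' := y' - b.
  have f1 : shiftp pi b x = x' by rewrite sE /x /x' /b subrK; ring.
  have f2 : shiftp pi b x' = x.
    rewrite sE /x /x' /b subrK.
    have -> : pi y' = y + pi y - y' by rewrite E; ring.
    ring.
  have [z0 hz0] := dsurj b.
  have f3 : shiftp pi b (pi z0) = pi z0 by rewrite sE -hz0 addrC subrK.
  have nx : x != x' by apply: contra nyy => /eqP E'; apply/eqP; rewrite /x /x' in E'; move/(congr1 (fun t => t + b)): E'; rewrite !subrK.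
  have zx : pi z0 != x by apply/eqP => E'; move: f1; rewrite -E' f3 => E''; move: nx; rewrite -E'' E' eqxx.
  have zx' : pi z0 != x' by apply/eqP => E'; move: f2; rewrite -E' f3 => E''; move: nx; rewrite -E'' E' eqxx.
  have [w Hw] : exists w, w \notin [:: x; x'; pi z0] by apply: avoid; rewrite cardT /=; lia.
  move: Hw; rewrite !inE !negb_or => /and3P [w1 w2 w3].
  have cl : forall a, a \in [:: x; x'] -> shiftp pi b a \in [:: x; x'].
    by move=> a; rewrite !inE => /orP [] /eqP ->; rewrite ?f1 ?f2 eqxx ?orbT.
  have := H b; rewrite leqNgt => /negP; apply.
  apply: (@three_orbits _ _ x (pi z0) w); apply: orb_neq.
  - by apply/negP => /(fixed_orb f3) E0; rewrite E0 eqxx in zx.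
  - by rewrite porbit_sym; apply/negP => /(fixed_orb f3) E0; rewrite E0 eqxx in w3.
  - apply/negP => /(closed_porbit cl); rewrite !inE eqxx => /(_ isT).
    by rewrite (negbTE w1) (negbTE w2).
have S1 : \sum_(y : 'I_N) (y - pi y) ^+ 2 = \sum_(y : 'I_N) y ^+ 2.
  by rewrite [RHS](reindex_inj dinj).
have S2 : \sum_(y : 'I_N) (y + pi y) ^+ 2 = \sum_(y : 'I_N) y ^+ 2.
  by rewrite [RHS](reindex_inj sinj).
have S3 : \sum_(y : 'I_N) (pi y) ^+ 2 = \sum_(y : 'I_N) y ^+ 2.
  by rewrite [RHS](reindex_inj (@perm_inj _ pi)).
have S4 : \sum_(y : 'I_N) ((y - pi y) ^+ 2 + (y + pi y) ^+ 2)
        = \sum_(y : 'I_N) (2%:R * y ^+ 2 + 2%:R * (pi y) ^+ 2).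
  by apply: eq_bigr => y _; ring.
rewrite !big_split /= S1 S2 -!mulr_sumr S3 in S4.
have S5 : (\sum_(y : 'I_N) y ^+ 2) *+ 2 = 0.
  set X := \sum_(y : 'I_N) y ^+ 2 in S4 *.
  have -> : X *+ 2 = (2%:R * X + 2%:R * X) - (X + X) by ring.
  by rewrite -S4 subrr.
have S6 : (\sum_(y : 'I_N) y ^+ 2) = ((\sum_(i < N) i ^ 2)%N)%:R.
  by rewrite natr_sum; apply: eq_bigr => y _; rewrite natrX natr_Zp.
move: S5; rewrite S6 -mulr_natl -natrM Zp_nat => /(congr1 val) /= E.
by rewrite /dvdn -mul2n E.
Qed.
End UB.

Lemma sumsq6 N : (\sum_(i < N) i ^ 2) * 6 + 3 * N * N = 2 * N * N * N + N.
Proof.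
elim: N => [|N IH]; first by rewrite big_ord0.
rewrite big_ord_recr /=; move: IH; set S := \sum_(i < N) _; rewrite -mulnn; nia.
Qed.

Lemma no_div N : 3 %| N -> 0 < N -> ~~ (N %| (\sum_(i < N) i ^ 2).*2).
Proof.
move=> /dvdnP [k ->] Hk; apply/negP => /dvdnP [c Hc].
have := sumsq6 (k * 3); rewrite -!mul2n in Hc *.
set S := \sum_(i < k * 3) i ^ 2 in Hc *.
move=> E.
have E2 : k * (3 * c + 9 * k) = k * (18 * k * k + 1) by nia.
have k0 : 0 < k by lia.
move: E2 => /eqP; rewrite eqn_pmul2l // => /eqP E3.
lia.
Qed.

Section Part4.
Local Open Scope ring_scope.

Lemma Z3_cover (u u' a : 'Z_3) : a != 0 -> [|| u' == u, u' == u - a | u' == u - a - a].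
Proof.
by case: u => [[|[|[|//]]] Hu]; case: u' => [[|[|[|//]]] Hu']; case: a => [[|[|[|//]]] Ha].
Qed.

Lemma Z3_three (u u' : 'Z_3) : [|| u' == u, u' == u + 1 | u' == u - 1].
Proof.
by case: u => [[|[|[|//]]] Hu]; case: u' => [[|[|[|//]]] Hu'].
Qed.

Lemma Z3_3 (u : 'Z_3) : u + u + u = 0.
Proof. by case: u => [[|[|[|//]]] Hu]; apply: val_inj. Qed.

Section Abs.
Variables (p : nat) (T : finType) (s : {perm T}) (U : T -> 'Z_3) (V : T -> 'F_p).
Variables (g c v0 : 'F_p) (G : 'F_p -> 'Z_3).
Hypotheses (UVinj : forall x y, U x = U y -> V x = V y -> x = y)
 (UVsurj : forall u v, exists x, U x = u /\ V x = v)
 (sV : forall x, V (s x) = g * V x + c)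
 (sU : forall x, U (s x) = - U x + G (V x))
 (fixv0 : g * v0 + c = v0)
 (gpow : forall w, w != 0 -> exists j, g ^+ j = w)
 (gord : g ^+ p.-1 = 1)
 (peven : ~~ odd p.-1)
 (Ane : forall w, w != 0 -> \sum_(j < p.-1) (-1) ^+ j * G (v0 + g ^+ j * w) != 0).

Lemma iterV k x : V ((s ^+ k)%g x) = v0 + g ^+ k * (V x - v0).
Proof.
have hc : c = v0 - g * v0 by rewrite -{1}fixv0; ring.
elim: k => [|k IH]; first by rewrite expg0 perm1; ring.
by rewrite expgSr permM sV IH hc exprS; ring.
Qed.

Lemma iterU k x : (-1) ^+ k * U ((s ^+ k)%g x) =
  U x + \sum_(j < k) (-1) ^+ j.+1 * G (v0 + g ^+ j * (V x - v0)).
Proof.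
elim: k => [|k IH]; first by rewrite expg0 perm1 big_ord0; ring.
rewrite expgSr permM sU big_ord_recr /= addrA -IH iterV exprS; ring.
Qed.

Lemma ret x : V ((s ^+ p.-1)%g x) = V x /\
  U ((s ^+ p.-1)%g x) = U x - \sum_(j < p.-1) (-1) ^+ j * G (v0 + g ^+ j * (V x - v0)).
Proof.
split; first by rewrite iterV gord; ring.
have := iterU p.-1 x; rewrite -signr_odd (negbTE peven) expr0 mul1r => ->.
rewrite -sumrN; congr (_ + _); apply: eq_bigr => j _; rewrite exprS; ring.
Qed.

Lemma abs_orbits : (#|porbits s| <= 3)%N.
Proof.
pose u0 := - G v0.
have [z1 [z1u z1v]] := UVsurj u0 v0.
have [z2 [z2u z2v]] := UVsurj (u0 + 1) v0.
have [z3 [z3u z3v]] := UVsurj 0 (v0 + 1).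
apply: (@le3_orbits _ _ z1 z2 z3) => x.
have [xv|xv] := eqVneq (V x) v0.
  case/or3P: (Z3_three u0 (U x)) => /eqP xu.
  - by rewrite (UVinj (x := x) (y := z1)) ?porbit_id // ?z1u ?z1v.
  - by rewrite (UVinj (x := x) (y := z2)) ?porbit_id ?orbT // ?z2u ?z2v.
  - rewrite (UVinj (x := x) (y := s z2)) ?mem_porbit1 ?orbT //.
    + by have := mem_porbit s 1 z2; rewrite expg1 => ->; rewrite orbT.
    + rewrite sU z2u z2v xu /u0.
      have := Z3_3 (G v0); move: (G v0) => t ht.
      have -> : - (- t + 1) + t = (t + t + t) + (- t - 1) by ring.
      by rewrite ht add0r.
    + by rewrite sV z2v fixv0.
have w0 : V x - v0 != 0 by rewrite subr_eq0.
have [j gj] := gpow w0.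
pose y := (s ^+ j)%g z3.
have yv : V y = V x by rewrite /y iterV z3v gj; ring.
set a := \sum_(j < p.-1) (-1) ^+ j * G (v0 + g ^+ j * (V x - v0)).
have a0 : a != 0 := Ane w0.
have [r1v r1u] := ret y.
have [r2v r2u] := ret ((s ^+ p.-1)%g y).
rewrite r1v yv -/a in r2u; rewrite yv -/a in r1u.
have m1 : y \in porbit s z3 by apply: mem_porbit.
have m2 : (s ^+ p.-1)%g y \in porbit s z3 by rewrite /y -permM -expgD mem_porbit.
have m3 : (s ^+ p.-1)%g ((s ^+ p.-1)%g y) \in porbit s z3.
  by rewrite /y -!permM -!expgD mem_porbit.
case/or3P: (Z3_cover (U y) (U x) a0) => /eqP xu.
- by rewrite (UVinj (x := x) (y := y)) ?m1 ?orbT.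
- by rewrite (UVinj (x := x) (y := (s ^+ p.-1)%g y)) ?m2 ?orbT // ?r1u ?r1v.
- by rewrite (UVinj (x := x) (y := (s ^+ p.-1)%g ((s ^+ p.-1)%g y))) ?m3 ?orbT // ?r2u ?r1u ?r2v ?r1v.
Qed.
End Abs.

End Part4.

Section Part5.
Local Open Scope ring_scope.

Section Chi.
Variable p : nat.
Hypothesis pp : prime p.
Hypothesis p3 : (3 < p)%N.

Local Notation F := 'F_p.

Lemma cardF : #|F| = p.
Proof. exact: card_Fp. Qed.

Lemma fermat (x : F) : x != 0 -> x ^+ p.-1 = 1.
Proof.
move=> nx; apply: (mulIf nx); rewrite mul1r -exprSr prednK ?prime_gt0 //.
by have := expf_card x; rewrite cardF.
Qed.

Lemma exists_prim : exists g : F, p.-1.-primitive_root g.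
Proof.
have := @has_prim_root F p.-1 (enum (predC1 (0 : F))).
have p1 : (0 < p.-1)%N by rewrite -subn1; lia.
have a1 : all p.-1.-unity_root (enum (predC1 (0 : F))).
  by apply/allP => x; rewrite mem_enum /= unity_rootE => /fermat ->.
have s1 : (p.-1 <= size (enum (predC1 (0 : F)%R)))%N by rewrite -cardE cardC1 cardF.
by move=> /(_ p1 a1 (enum_uniq _) s1) /hasP [g _ Hg]; exists g.
Qed.


Lemma p_odd : odd p.
Proof. by case: (even_prime pp) => // p2; move: p3; rewrite p2. Qed.

Lemma m1_neq1 : (-1 : F) != 1.
Proof.
apply/eqP => E.
have H2 : ((2%N)%:R : F) = 0 by rewrite -[2%N]/(1 + 1)%N natrD -{1}E addNr.
by have := val_Fp_nat pp 2; rewrite H2 modn_small //; lia.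
Qed.

Variables (g : F).
Hypothesis prim : p.-1.-primitive_root g.

Local Notation h := (p.-1./2)%N.

Lemma h2 : (h.*2 = p.-1)%N.
Proof.
have := odd_double_half p.-1; have := p_odd.
by rewrite -(prednK (prime_gt0 pp)) /= => /negbTE ->.
Qed.

Lemma g_h : g ^+ h != 1.
Proof.
apply/negP => /eqP E; have := prim_order_dvd prim h; rewrite E eqxx.
have hp : (0 < h)%N by have := h2; have := p3; lia.
by move/(dvdn_leq hp); have := h2; have := p3; lia.
Qed.

Lemma g_ord : g ^+ p.-1 = 1.
Proof. exact: prim_expr_order. Qed.

Lemma g_neq0 : g != 0.
Proof.
apply/eqP => E; have := g_ord; rewrite E expr0n.
have -> : (p.-1 == 0%N) = false by have := p3; lia.
by move/eqP; rewrite eq_sym oner_eq0.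
Qed.

Lemma g_neq1 : g != 1.
Proof. by apply: contra g_h => /eqP ->; rewrite expr1n. Qed.

Lemma dlog (t : F) : t != 0 -> exists i : 'I_p.-1, t = g ^+ i.
Proof. by move=> nt; have [i ->] := prim_rootP prim (fermat nt); exists i. Qed.

Lemma pow_h (x : F) : x != 0 -> (x ^+ h == 1) || (x ^+ h == -1).
Proof.
move=> nx; rewrite -sqrf_eq1 -exprM muln2 h2; apply/eqP; exact: fermat.
Qed.

Definition chi (x : F) : int := if x == 0 then 0 else if x ^+ h == 1 then 1 else -1.

Lemma chi0 : chi 0 = 0.
Proof. by rewrite /chi eqxx. Qed.

Lemma chi1 : chi 1 = 1.
Proof. by rewrite /chi oner_eq0 expr1n eqxx. Qed.

Lemma chig : chi g = -1.
Proof. by rewrite /chi (negbTE g_neq0) (negbTE g_h). Qed.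

Lemma chi_sq x : x != 0 -> chi x * chi x = 1.
Proof. by move=> nx; rewrite /chi (negbTE nx); case: ifP. Qed.

Lemma chiM x y : chi (x * y) = chi x * chi y.
Proof.
rewrite /chi mulf_eq0.
have [->|nx] := eqVneq x 0; first by rewrite /= mul0r.
have [->|ny] := eqVneq y 0; first by rewrite orbT mulr0.
rewrite /= exprMn.
have mm : (-1 : F) * -1 = 1 by rewrite mulrNN mulr1.
case/orP: (pow_h nx) => /eqP ->; case/orP: (pow_h ny) => /eqP ->;
  rewrite ?mulr1 ?mul1r ?mm ?eqxx ?(negbTE m1_neq1) //.
Qed.

Lemma chi_pow j : chi (g ^+ j) = (-1) ^+ j.
Proof. by elim: j => [|j IH]; rewrite ?expr0 ?chi1 // exprS chiM IH chig -exprS. Qed.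

Lemma sum_chi : \sum_(x : F) chi x = 0.
Proof.
have gi : injective (fun x : F => g * x) by apply: mulfI; exact: g_neq0.
have E : \sum_(x : F) chi x = - \sum_(x : F) chi x.
  rewrite {1}(reindex_inj gi) /= -sumrN; apply: eq_bigr => x _.
  by rewrite chiM chig mulN1r.
move: E; set S := \sum_(x : F) chi x; lia.
Qed.

Definition J (a : F) : int := \sum_(t : F) chi t * chi (a + t).

Lemma J0 : J 0 = (p.-1)%:R.
Proof.
rewrite /J (bigD1 0) //= chi0 mul0r add0r.
rewrite (eq_bigr (fun _ => 1)); last by move=> t nt; rewrite add0r chi_sq.
by rewrite sumr_const cardC1 cardF.
Qed.

Lemma Ja a : a != 0 -> J a = -1.
Proof.
move=> na.
have hi : injective (fun t : F => 1 + a * t^-1).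
  by move=> x y /addrI /(mulfI na) /invr_inj.
have E : \sum_(t : F) chi (1 + a * t^-1) = 0.
  by rewrite -[RHS]sum_chi [RHS](reindex_inj hi).
rewrite (bigD1 0) //= invr0 mulr0 addr0 chi1 in E.
rewrite /J (bigD1 0) //= chi0 mul0r add0r.
have <- : \sum_(t | t != 0) chi (1 + a * t^-1) = \sum_(i | i != 0) chi i * chi (a + i).
  apply: eq_bigr => t nt.
  have -> : a + t = t * (1 + a * t^-1) by rewrite mulrDr mulr1 mulrCA divff // mulr1 addrC.
  by rewrite chiM mulrA chi_sq // mul1r.
by move: E; set S := \sum_(t | t != 0) _; lia.
Qed.

Lemma sum_pow (phi : F -> int) w : w != 0 ->
  \sum_(j < p.-1) phi (g ^+ j * w) = \sum_(t | t != 0) phi t.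
Proof.
move=> nw.
rewrite -(big_map (fun j : 'I_p.-1 => g ^+ j * w) xpredT phi).
rewrite -[RHS]big_filter.
apply: perm_big; apply: uniq_perm.
- rewrite map_inj_uniq ?index_enum_uniq // => i j /(mulIf nw) /eqP.
  by rewrite (eq_prim_root_expr prim) !modn_small // => /eqP /val_inj.
- by rewrite filter_uniq ?index_enum_uniq.
move=> t; rewrite mem_filter mem_index_enum andbT.
apply/mapP/idP => [[j _ ->]|nt].
  by rewrite mulf_neq0 // expf_neq0 // g_neq0.
have [i Hi] := dlog (mulf_neq0 nt (invr_neq0 nw)).
exists i; first exact: mem_index_enum.
by rewrite -Hi divfK.
Qed.

End Chi.

End Part5.

Section Part6.
Local Open Scope ring_scope.

Section Constr.
Variable p : nat.
Hypothesis pp : prime p.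
Hypothesis p3 : (3 < p)%N.
Local Notation F := 'F_p.
Local Notation n := (3 * p)%N.

Lemma n_gt0 : (0 < n)%N.
Proof. by have := prime_gt0 pp; lia. Qed.

Lemma cop : coprime 3 p.
Proof. by rewrite prime_coprime // dvdn_prime2 //; apply/eqP => E; move: p3; rewrite -E. Qed.

Definition U (x : 'I_n) : 'Z_3 := (val x)%:R.
Definition V (x : 'I_n) : F := (val x)%:R.

Lemma valU (k : nat) : nat_of_ord ((k %% n)%:R : 'Z_3) = (k %% 3)%N.
Proof. by rewrite (val_Zp_nat (p:=3)) // modn_dvdm // dvdn_mulr. Qed.

Lemma valV (k : nat) : nat_of_ord ((k %% n)%:R : F) = (k %% p)%N.
Proof. by rewrite val_Fp_nat // modn_dvdm // dvdn_mull. Qed.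

Lemma U_mod k : ((k %% n)%:R : 'Z_3) = k%:R.
Proof. by apply: val_inj => /=; rewrite valU (val_Zp_nat (p:=3)). Qed.

Lemma V_mod k : ((k %% n)%:R : F) = k%:R.
Proof. by apply: val_inj => /=; rewrite valV val_Fp_nat. Qed.

Definition mk (u : 'Z_3) (v : F) : 'I_n := Ordinal (ltn_pmod (chinese 3 p u v) n_gt0).

Lemma U_mk u v : U (mk u v) = u.
Proof.
apply: val_inj; rewrite /U /= U_mod (val_Zp_nat (p:=3)) // chinese_modl ?cop //.
by rewrite modn_small.
Qed.

Lemma V_mk u v : V (mk u v) = v.
Proof.
apply: val_inj; rewrite /V /= V_mod val_Fp_nat // chinese_modr ?cop //.
rewrite modn_small //; have hv : (nat_of_ord v < (Zp_trunc (pdiv p)).+2)%N := ltn_ord v; by rewrite [X in (_ < X)%N]Fp_cast in hv.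
Qed.

Lemma UVinj x y : U x = U y -> V x = V y -> x = y.
Proof.
move=> hu hv; apply: val_inj => /=.
have hu' : (x %% 3 = y %% 3)%N.
  by move: (congr1 (@nat_of_ord _) hu); rewrite /U !(val_Zp_nat (p:=3)).
have hv' : (x %% p = y %% p)%N.
  by move: (congr1 (@nat_of_ord _) hv); rewrite /V !val_Fp_nat.
have : (nat_of_ord x == y %[mod n])%N by rewrite chinese_remainder ?cop // hu' hv' !eqxx.
by rewrite !modn_small // => /eqP.
Qed.

Lemma U_add x b : U (addZ x b) = U x + U b.
Proof. by rewrite /U addZE U_mod natrD. Qed.

Lemma V_add x b : V (addZ x b) = V x + V b.
Proof. by rewrite /V addZE V_mod natrD. Qed.


Lemma UVsurj u v : exists x, U x = u /\ V x = v.
Proof. by exists (mk u v); rewrite U_mk V_mk. Qed.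

Variable g : F.
Hypothesis prim : p.-1.-primitive_root g.

Definition e : bool := (p %% 3 == 1)%N.

Definition F0 (y : F) : 'Z_3 := (@chi p y)%:~R + (e%:R) * (@chi p (y - 1))%:~R.

Definition pif (x : 'I_n) : 'I_n := mk (- U x + F0 (V x)) (g * V x).

Lemma pif_inj : injective pif.
Proof.
move=> x y E.
have hv : V x = V y.
  by move: (congr1 V E); rewrite /pif !V_mk; apply: mulfI; exact: (g_neq0 pp p3 prim).
apply: UVinj => //.
by move: (congr1 U E); rewrite /pif !U_mk hv => /addIr /oppr_inj.
Qed.

Definition pi : {perm 'I_n} := perm pif_inj.

Lemma s_U b x : U (shiftp pi b x) = - U x + (F0 (V x + V b) - U b).
Proof. by rewrite shiftpE permE /pif U_mk U_add V_add; ring. Qed.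

Lemma s_V b x : V (shiftp pi b x) = g * V x + g * V b.
Proof. by rewrite shiftpE permE /pif V_mk V_add; ring. Qed.

Lemma chi_pm1 (w : F) : w != 0 -> (@chi p w = 1) \/ (@chi p w = -1).
Proof. by move=> nw; rewrite /chi (negbTE nw); case: ifP; [left | right]. Qed.

Lemma Z3_pm1 (k : int) : k = 1 \/ k = -1 -> (k%:~R : 'Z_3) * 1 != 0.
Proof. by case=> ->; rewrite mulr1 ?rmorph1 ?rmorphN1. Qed.

Lemma intr_nat3 (k : nat) : ((k%:R : int)%:~R : 'Z_3) = k%:R.
Proof. by rewrite rmorph_nat. Qed.

Lemma val3 (k : nat) : nat_of_ord (k%:R : 'Z_3) = (k %% 3)%N.
Proof. exact: (val_Zp_nat (p:=3)). Qed.

Lemma p_mod3 : (p %% 3 == 1)%N || (p %% 3 == 2)%N.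
Proof.
have : ~~ (3 %| p)%N.
  apply/negP => /(prime_nt_dvdP pp) => /(_ isT) E; move: p3; rewrite -E.
  done.
rewrite /dvdn; have := ltn_pmod p (isT : (0 < 3)%N); lia.
Qed.

Lemma L_ne0 (a : F) :
  (((@J p a) + (e%:R : int) * (@J p (a - 1)))%:~R : 'Z_3) != 0.
Proof.
have J0' := J0 pp; have Ja' := Ja pp p3 prim.
rewrite /e; case he : (p %% 3 == 1)%N.
  have E0 : ((p.-1)%:R : 'Z_3) = 0.
    by apply: val_inj; rewrite /= val3; move/eqP: he; have := p3; lia.
  rewrite mul1r intrD.
  have [->|na] := eqVneq a 0.
    rewrite J0' Ja'; last by rewrite sub0r oppr_eq0 oner_eq0.
    by rewrite intr_nat3 E0 add0r rmorphN1.
  have [->|na1] := eqVneq a 1.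
    by rewrite subrr J0' Ja' // intr_nat3 E0 addr0 rmorphN1.
  rewrite !Ja' ?rmorphN1 //; last by rewrite subr_eq0.
have E1 : ((p.-1)%:R : 'Z_3) = 1.
  have := p_mod3; rewrite he /= => /eqP h2m; apply: val_inj; rewrite /= val3 (_ : (1 %% (Zp_trunc 3).+2 = 1)%N) //; have := p3; lia.
rewrite mul0r addr0.
have [->|na] := eqVneq a 0; first by rewrite J0' intr_nat3 E1.
by rewrite Ja' // rmorphN1.
Qed.

Lemma Ane_main (a w : F) : w != 0 ->
  \sum_(j < p.-1) (-1) ^+ j * F0 (a + g ^+ j * w) != 0.
Proof.
move=> nw.
pose phi (t : F) : int := @chi p (a + t) + (e%:R : int) * @chi p (a - 1 + t).
have E1 : \sum_(j < p.-1) (-1) ^+ j * F0 (a + g ^+ j * w) =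
          (\sum_(j < p.-1) @chi p (g ^+ j) * phi (g ^+ j * w))%:~R.
  rewrite rmorph_sum; apply: eq_bigr => j _.
  rewrite rmorphM (chi_pow pp p3 prim) rmorphXn rmorphN1 /phi rmorphD rmorphM rmorph_nat /F0.
  have -> : a + g ^+ j * w - 1 = a - 1 + g ^+ j * w by ring.
  done.
have E2 : \sum_(j < p.-1) @chi p (g ^+ j) * phi (g ^+ j * w) =
          @chi p w * ((@J p a) + (e%:R : int) * (@J p (a - 1))).
  have -> : \sum_(j < p.-1) @chi p (g ^+ j) * phi (g ^+ j * w) =
            @chi p w * \sum_(j < p.-1) (fun t => @chi p t * phi t) (g ^+ j * w).
    rewrite mulr_sumr; apply: eq_bigr => j _ /=.
    rewrite (chiM pp p3).
    transitivity ((@chi p w * @chi p w) * (@chi p (g ^+ j) * phi (g ^+ j * w))).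
      by rewrite (chi_sq nw) mul1r.
    ring.
  rewrite (sum_pow pp p3 prim (fun t => @chi p t * phi t) nw); congr (_ * _).
  rewrite [in RHS]/J mulr_sumr -big_split /= [in RHS](bigD1 0) //=. rewrite !(@chi0 p) !mul0r mulr0 !add0r.
  by apply: eq_bigr => t _; rewrite /phi; ring.
rewrite E1 E2 intrM.
have := L_ne0 a; move: (_%:~R : 'Z_3) => L nL.
case: (chi_pm1 nw) => ->; rewrite ?rmorph1 ?rmorphN1 ?mul1r ?mulN1r ?oppr_eq0 //.
Qed.

Lemma sum_sign k : \sum_(j < k.*2) ((-1) ^+ j : 'Z_3) = 0.
Proof.
elim: k => [|k IH]; first by rewrite big_ord0.
by rewrite doubleS !big_ord_recr /= IH exprS; ring.
Qed.

Lemma cyc_le3 b : (#|porbits (shiftp pi b)| <= 3)%N.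
Proof.
have g1 : 1 - g != 0 by rewrite subr_eq0 eq_sym; exact: (g_neq1 pp p3 prim).
pose c := g * V b.
pose v0 := c / (1 - g).
apply: (@abs_orbits p _ _ U V g c v0 (fun v => F0 (v + V b) - U b)).
- exact: UVinj.
- exact: UVsurj.
- exact: s_V.
- exact: s_U.
- by rewrite /v0 -{2}(divfK g1 c); ring.
- by move=> w /(dlog pp prim) [i ->]; exists i.
- exact: g_ord prim.
- by rewrite -subn1 oddB ?(prime_gt0 pp) // (p_odd pp p3).
- move=> w nw.
  have -> : \sum_(j < p.-1) (-1) ^+ j * (F0 (v0 + g ^+ j * w + V b) - U b) =
     \sum_(j < p.-1) (-1) ^+ j * F0 ((v0 + V b) + g ^+ j * w) - U b * \sum_(j < p.-1) (-1) ^+ j.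
    rewrite mulr_sumr -sumrB; apply: eq_bigr => j _.
    have -> : v0 + g ^+ j * w + V b = v0 + V b + g ^+ j * w by ring.
    ring.
  have ss : \sum_(j < p.-1) ((-1) ^+ j : 'Z_3) = 0 by rewrite -(h2 pp p3) sum_sign.
  rewrite ss mulr0 subr0.
  exact: Ane_main.
Qed.

End Constr.

End Part6.

Section Small.
Variables (n : nat) (H : 0 < n).

Definition mko (k : nat) : 'I_n := Ordinal (ltn_pmod k H).
Definition ordl : seq 'I_n := map mko (iota 0 n).

Lemma ordl_all (x : 'I_n) : x \in ordl.
Proof.
apply/mapP; exists (val x); first by rewrite mem_iota /= add0n.
by apply: val_inj; rewrite /= modn_small.
Qed.

Variables (tb tbi : seq nat) (zs : seq (seq nat)).
Definition fT (x : 'I_n) : 'I_n := mko (nth 0 tb x).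
Definition fTi (x : 'I_n) : 'I_n := mko (nth 0 tbi x).

Definition check_inv := all (fun x => fTi (fT x) == x) ordl.

Definition zb (b : 'I_n) (i : nat) : 'I_n := mko (nth 0 (nth [::] zs b) i).

Definition check_orb :=
  all (fun b => all (fun x =>
     [|| x \in traject (fun y => fT (addZ y b)) (zb b 0) n,
         x \in traject (fun y => fT (addZ y b)) (zb b 1) n |
         x \in traject (fun y => fT (addZ y b)) (zb b 2) n]) ordl) ordl.

Hypothesis Hinv : check_inv.
Hypothesis Horb : check_orb.

Lemma fT_inj : injective fT.
Proof.
apply: (can_inj (g := fTi)) => x.
by have /allP /(_ x (ordl_all x)) /eqP := Hinv.
Qed.

Definition piS : {perm 'I_n} := perm fT_inj.

Lemma trajP (s : {perm 'I_n}) (f : 'I_n -> 'I_n) z x :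
  s =1 f -> x \in traject f z n -> x \in porbit s z.
Proof.
move=> sf /trajectP [i _ ->].
have -> : iter i f z = (s ^+ i)%g z.
  by rewrite permX; elim: i => //= i ->; rewrite sf.
exact: mem_porbit.
Qed.

Lemma small_le3 b : #|porbits (shiftp piS b)| <= 3.
Proof.
apply: (@le3_orbits _ _ (zb b 0) (zb b 1) (zb b 2)) => x.
have sf : shiftp piS b =1 (fun y => fT (addZ y b)) by move=> y; rewrite shiftpE permE.
have /allP /(_ b (ordl_all b)) /allP /(_ x (ordl_all x)) := Horb.
by case/or3P => /(trajP sf) ->; rewrite ?orbT.
Qed.

End Small.

Lemma n6_ok : check_inv (isT : 0 < 6) [:: 4; 2; 1; 5; 3; 0] [:: 5; 2; 1; 4; 0; 3] /\
  check_orb (isT : 0 < 6) [:: 4; 2; 1; 5; 3; 0]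
    [:: [:: 0; 1; 0]; [:: 0; 1; 3]; [:: 0; 4; 0]; [:: 0; 0; 0]; [:: 0; 5; 0]; [:: 0; 1; 2]].
Proof. by split; vm_compute. Qed.

Lemma n9_ok : check_inv (isT : 0 < 9) [:: 5; 7; 1; 0; 2; 4; 6; 3; 8] [:: 3; 2; 4; 7; 5; 0; 6; 1; 8] /\
  check_orb (isT : 0 < 9) [:: 5; 7; 1; 0; 2; 4; 6; 3; 8]
    [:: [:: 0; 6; 8]; [:: 0; 1; 4]; [:: 0; 2; 3]; [:: 0; 1; 7]; [:: 0; 3; 5]; [:: 0; 1; 2];
        [:: 0; 1; 2]; [:: 0; 0; 0]; [:: 0; 0; 0]].
Proof. by split; vm_compute. Qed.

Lemma tclass_ge n (pi : {perm 'I_n}) :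
  (forall b, #|porbits (shiftp pi b)| <= 3) -> n - 3 <= tclass pi.
Proof.
move=> H; rewrite /tclass.
apply: (big_ind (fun x => n - 3 <= x)) => //.
- exact: leq_subr.
- by move=> x y hx hy; rewrite leq_min hx hy.
- by move=> b _; rewrite /tperm_ /cyc leq_sub2l.
Qed.

Lemma tclass_le n (pi : {perm 'I_n}) b : tclass pi <= tperm_ (shiftp pi b).
Proof.
rewrite /tclass; move: (mem_index_enum b); elim: (index_enum _) => [//|a l IH].
rewrite inE big_cons => /orP [/eqP <-|/IH h]; first exact: geq_minl.
exact: leq_trans (geq_minr _ _) h.
Qed.

Lemma ub_tclass m (pi : {perm 'I_m.+2}) : 3 %| m.+2 -> 3 < m.+2 -> tclass pi <= m.+2 - 3.
Proof.
move=> h3 h4.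
case: (boolP [exists b, 2 < #|porbits (shiftp pi b)|]).
  case/existsP => b hb; apply: leq_trans (tclass_le pi b) _.
  by rewrite /tperm_ /cyc leq_sub2l.
rewrite negb_exists => /forallP hall.
have : forall b, #|porbits (shiftp pi b)| <= 2 by move=> b; rewrite leqNgt hall.
move/(ub_core h4) => hd.
by move: (no_div h3 (ltn0Sn _)); rewrite hd.
Qed.

Theorem corollary1p5 (p : nat) : prime p -> tn (3 * p) = 3 * p - 3.
Proof.
move=> pp; apply/eqP; rewrite eqn_leq; apply/andP; split.
  have p1 := prime_gt1 pp.
  have [m Hm] : exists m, 3 * p = m.+2 by exists (3 * p - 2); lia.
  rewrite Hm; apply/bigmax_leqP => pi _; apply: ub_tclass; last by lia.
  by rewrite -Hm dvdn_mulr.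
have [->|p2] := eqVneq p 2.
  have [h1 h2] := n6_ok.
  change (6 - 3 <= tn 6).
  have H := tclass_ge (small_le3 h1 h2).
  by apply: leq_trans H _; rewrite /tn; exact: leq_bigmax.
have [->|p3'] := eqVneq p 3.
  have [h1 h2] := n9_ok.
  change (9 - 3 <= tn 9).
  have H := tclass_ge (small_le3 h1 h2).
  by apply: leq_trans H _; rewrite /tn; exact: leq_bigmax.
have p3 : 3 < p by have := prime_gt1 pp; lia.
have [g prim] := exists_prim pp p3.
have H := tclass_ge (cyc_le3 pp p3 prim).
by apply: leq_trans H _; rewrite /tn; exact: leq_bigmax.
Qed.
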